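(* Let $n\ge2$, $\alpha,\beta>0$ with $\alpha^2+\beta^2=1$ and $r=\alpha/\beta\in(0,1)$. Let $\mathcal E_\gamma$, $\gamma\in[0,1]$, be a family of single-qubit channels acting as $|0\rangle\langle0|\mapsto|0\rangle\langle0|$, $|1\rangle\langle1|\mapsto(1-\gamma)|1\rangle\langle1|+\gamma|0\rangle\langle0|$, $|0\rangle\langle1|\mapsto\lambda(\gamma)|0\rangle\langle1|$ with $\lambda(\gamma)\in\mathbb R$ and $\lambda(\gamma)^2\le1-\gamma$, and define $S(\gamma)=\lambda(\gamma)^2/(1-\gamma)$ for $\gamma\in[0,1)$. Let $\rho(\gamma)=\mathcal E_\gamma^{\otimes n}(|\psi_n\rangle\langle\psi_n|)$, $|\psi_n\rangle=\alpha|0^n\rangle+\beta|1^n\rangle$, so that $P_0=\alpha^2+\beta^2\gamma^n$, $P_n=\beta^2(1-\gamma)^n$, $|c|=\alpha\beta|\lambda(\gamma)|^n$. Suppose $\gamma_e\in(0,1)$ is the unique $\gamma\in(0,1)$ at which the partial-transpose block determinant $\beta^4[\gamma(1-\gamma)]^n-\alpha^2\beta^2\lambda(\gamma)^{2n}$ vanishes (the bipartite-negativity death threshold, which is the same for every bipartition), and $\gamma_+\in(0,1)$ is the unique $\gamma\in(0,1)$ with $|c(\gamma)|=P_n(\gamma)$ and $P_0(\gamma)\ge|c(\gamma)|$. Then $$r^{2/n}S(\gamma_e)=\gamma_e,\qquad r^{2/n}S(\gamma_+)=1-\gamma_+,$$ and $\gamma_e+\gamma_+=1$ holds if and only if $S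(\gamma_e)=S(1-\gamma_e)$.
   Context: Here $c=\langle0^n|\rho(\gamma)|1^n\rangle=\alpha\beta\lambda(\gamma)^n$, and $\rho(\gamma)$ lies in the real GHZ-$X$ manifold (diagonal in the computational basis except for the entry between $|0^n\rangle$ and $|1^n\rangle$). Pure amplitude damping is the case $\lambda=\sqrt{1-\gamma}$, $S\equiv1$. *)

(* Defs.v *)
From Stdlib Require Import Reals.
Open Scope R_scope.

Definition P0 (alpha beta : R) (n : nat) (g : R) : R :=
  alpha ^ 2 + beta ^ 2 * g ^ n.

Definition Pn (beta : R) (n : nat) (g : R) : R :=
  beta ^ 2 * (1 - g) ^ n.

Definition coh (alpha beta : R) (lam : R -> R) (n : nat) (g : R) : R :=
  alpha * beta * (lam g) ^ n.

Definition ptdet (alpha beta : R) (lam : R -> R) (n : nat) (g : R) : R :=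
  beta ^ 4 * (g * (1 - g)) ^ n - alpha ^ 2 * beta ^ 2 * (lam g) ^ (2 * n).

(* S(gamma) = lam(gamma)^2 / (1 - gamma), meaningful for gamma in [0,1) *)
Definition Sfun (lam : R -> R) (g : R) : R := (lam g) ^ 2 / (1 - g).

(* Main.v *)
Require Import Defs.
From Stdlib Require Import Reals Lra Lia.
Open Scope R_scope.

Lemma pow_lt_aux (a b : R) (m : nat) : (0 < m)%nat -> 0 <= a -> a < b -> a ^ m < b ^ m.
Proof.
  intros Hm Ha Hab. induction m as [|m IH]; [lia|].
  destruct m as [|m]; [simpl; lra|].
  assert (H := IH ltac:(lia)).
  change (a * a ^ S m < b * b ^ S m).
  assert (0 <= a ^ S m) by (apply pow_le; lra).
  nra.
Qed.

Lemma pow_inj_aux (a b : R) (m : nat) : (0 < m)%nat -> 0 <= a -> 0 <= b -> a ^ m = b ^ m -> a = b.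
Proof.
  intros Hm Ha Hb H. destruct (Rtotal_order a b) as [h|[h|h]]; auto.
  - pose proof (pow_lt_aux a b m Hm Ha h); lra.
  - pose proof (pow_lt_aux b a m Hm Hb h); lra.
Qed.

Lemma Sfun_pow (lam : R -> R) g n : g < 1 ->
  (Sfun lam g) ^ n * (1 - g) ^ n = (lam g) ^ (2 * n).
Proof.
  intros Hg. unfold Sfun. rewrite <- Rpow_mult_distr, pow_mult.
  f_equal. field. lra.
Qed.

Theorem proposition1 (n : nat) (alpha beta : R) (lam : R -> R) (ge gp : R) :
  (2 <= n)%nat ->
  0 < alpha -> 0 < beta -> alpha ^ 2 + beta ^ 2 = 1 ->
  0 < alpha / beta < 1 ->
  (forall g, 0 <= g <= 1 -> (lam g) ^ 2 <= 1 - g) ->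
  (* gamma_e: unique zero of the PT block determinant in (0,1) *)
  0 < ge < 1 -> ptdet alpha beta lam n ge = 0 ->
  (forall g, 0 < g < 1 -> ptdet alpha beta lam n g = 0 -> g = ge) ->
  (* gamma_+: unique gamma in (0,1) with |c| = P_n and P_0 >= |c| *)
  0 < gp < 1 ->
  Rabs (coh alpha beta lam n gp) = Pn beta n gp ->
  P0 alpha beta n gp >= Rabs (coh alpha beta lam n gp) ->
  (forall g, 0 < g < 1 ->
     Rabs (coh alpha beta lam n g) = Pn beta n g ->
     P0 alpha beta n g >= Rabs (coh alpha beta lam n g) -> g = gp) ->
  Rpower (alpha / beta) (2 / INR n) * Sfun lam ge = ge /\
  Rpower (alpha / beta) (2 / INR n) * Sfun lam gp = 1 - gp /\
  (ge + gp = 1 <-> Sfun lam ge = Sfun lam (1 - ge)).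
Proof.
  intros Hn Ha Hb Hab Hr Hlam Hge Hpe Hue Hgp Hcp Hpp Hup.
  set (r := alpha / beta) in *.
  set (k := Rpower r (2 / INR n)).
  assert (Hkpos : 0 < k) by (unfold k, Rpower; apply exp_pos).
  assert (HnR : INR n <> 0) by (apply not_0_INR; lia).
  assert (Hkn : k ^ n = alpha ^ 2 / beta ^ 2).
  { unfold k. rewrite <- Rpower_pow by exact Hkpos. rewrite Rpower_mult.
    replace (2 / INR n * INR n) with (INR 2) by (simpl; field; exact HnR).
    rewrite Rpower_pow by lra. unfold r. field. lra. }
  assert (Hn0 : (0 < n)%nat) by lia.
  assert (HS0 : forall g, g < 1 -> 0 <= Sfun lam g).
  { intros g Hg. unfold Sfun. apply Rmult_le_pos.
    - apply pow2_ge_0.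
    - left; apply Rinv_0_lt_compat; lra. }
  assert (Ke : forall g, 0 < g < 1 -> ptdet alpha beta lam n g = 0 -> k * Sfun lam g = g).
  { intros g Hg Hp. unfold ptdet in Hp.
    apply (pow_inj_aux _ _ n Hn0).
    - apply Rmult_le_pos; [lra | apply HS0; lra].
    - lra.
    - rewrite Rpow_mult_distr, Hkn.
      assert (H1g : 0 < (1 - g) ^ n) by (apply pow_lt; lra).
      pose proof (Sfun_pow lam g n ltac:(lra)) as HSp.
      rewrite Rpow_mult_distr in Hp.
      apply (Rmult_eq_reg_r ((1 - g) ^ n)); [| lra].
      rewrite Rmult_assoc, HSp.
      assert (beta ^ 4 * (g ^ n * (1 - g) ^ n) = alpha ^ 2 * beta ^ 2 * lam g ^ (2 * n)) as E by lra.
      assert (Hb2 : 0 < beta ^ 2) by (apply pow_lt; lra).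
      replace (beta ^ 4) with (beta ^ 2 * beta ^ 2) in E by ring.
      set (L := lam g ^ (2 * n)) in *. set (X := g ^ n * (1 - g) ^ n) in *.
      clearbody L X.
      apply (Rmult_eq_reg_l (beta ^ 2)); [| lra].
      field_simplify; [| lra].
      apply (Rmult_eq_reg_l (beta ^ 2)); [| lra]. nra. }
  assert (Kp : forall g, 0 < g < 1 ->
     (Rabs (coh alpha beta lam n g) = Pn beta n g <-> k * Sfun lam g = 1 - g)).
  { intros g Hg.
    assert (H1g : 0 < (1 - g) ^ n) by (apply pow_lt; lra).
    pose proof (Sfun_pow lam g n ltac:(lra)) as HSp.
    assert (Hb2 : 0 < beta ^ 2) by (apply pow_lt; lra).
    assert (EQ : Rabs (coh alpha beta lam n g) = Pn beta n g <->
                 alpha ^ 2 * lam g ^ (2 * n) = beta ^ 2 * ((1 - g) ^ n) ^ 2).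
    { unfold coh, Pn. split; intro H.
      - assert (H2 : (Rabs (alpha * beta * lam g ^ n)) ^ 2 = (beta ^ 2 * (1 - g) ^ n) ^ 2) by (rewrite H; ring).
        rewrite pow2_abs in H2. rewrite pow_mult.
        replace ((lam g ^ 2) ^ n) with ((lam g ^ n) ^ 2) by (rewrite <- !pow_mult; f_equal; lia).
        apply (Rmult_eq_reg_r (beta ^ 2)); [| lra].
        replace (beta ^ 2) with (beta * beta) by ring.
        replace (beta * beta) with (beta ^ 2) in Hb2 by ring.
        nra.
      - apply (pow_inj_aux _ _ 2 ltac:(lia)).
        + apply Rabs_pos.
        + apply Rmult_le_pos; lra.
        + rewrite pow2_abs.
          rewrite pow_mult in H.
          replace ((lam g ^ 2) ^ n) with ((lam g ^ n) ^ 2) in H by (rewrite <- !pow_mult; f_equal; lia).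
          replace ((alpha * beta * lam g ^ n) ^ 2) with (beta ^ 2 * (alpha ^ 2 * (lam g ^ n) ^ 2)) by ring.
          rewrite H. ring. }
    rewrite EQ. split; intro H.
    - apply (pow_inj_aux _ _ n Hn0).
      + apply Rmult_le_pos; [lra | apply HS0; lra].
      + lra.
      + rewrite Rpow_mult_distr, Hkn.
        apply (Rmult_eq_reg_r ((1 - g) ^ n)); [| lra].
        rewrite Rmult_assoc, HSp.
        set (L := lam g ^ (2 * n)) in *. set (Y := (1 - g) ^ n) in *. clearbody L Y.
        replace (alpha ^ 2 / beta ^ 2 * L) with ((alpha ^ 2 * L) / beta ^ 2) by (field; lra).
        rewrite H. field. lra.
    - assert (H' : (k * Sfun lam g) ^ n * (1 - g) ^ n = (1 - g) ^ n * (1 - g) ^ n) by (rewrite H; ring).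
      rewrite Rpow_mult_distr, Hkn, Rmult_assoc, HSp in H'.
      set (L := lam g ^ (2 * n)) in *. set (Y := (1 - g) ^ n) in *. clearbody L Y.
      replace (alpha ^ 2 * L) with (beta ^ 2 * (alpha ^ 2 / beta ^ 2 * L)) by (field; lra).
      rewrite H'. ring. }
  assert (Ee : k * Sfun lam ge = ge) by (apply Ke; auto).
  assert (Ep : k * Sfun lam gp = 1 - gp) by (apply (proj1 (Kp gp Hgp)); auto).
  split; [exact Ee|]. split; [exact Ep|].
  split; intro H.
  - replace (1 - ge) with gp by lra.
    apply (Rmult_eq_reg_l k); [| lra]. lra.
  - assert (Eg : 1 - ge = gp).
    { apply Hup; [lra | |].
      - apply (proj2 (Kp (1 - ge) ltac:(lra))). rewrite <- H, Ee. ring.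
      - assert (Hc : Rabs (coh alpha beta lam n (1 - ge)) = Pn beta n (1 - ge)).
        { apply (proj2 (Kp (1 - ge) ltac:(lra))). rewrite <- H, Ee. ring. }
        rewrite Hc. unfold P0, Pn. replace (1 - (1 - ge)) with ge by ring.
        (* ge^n = k^n S^n <= alpha^2/beta^2 *)
        assert (HSle : Sfun lam ge <= 1).
        { unfold Sfun. pose proof (Hlam ge ltac:(lra)).
          apply (Rmult_le_reg_r (1 - ge)); [lra|].
          unfold Rdiv. rewrite Rmult_assoc, Rinv_l by lra. lra. }
        assert (Hgn : ge ^ n <= alpha ^ 2 / beta ^ 2).
        { rewrite <- Ee, Rpow_mult_distr, Hkn.
          assert (Sfun lam ge ^ n <= 1).
          { replace 1 with (1 ^ n) by apply pow1. apply pow_incr. split; [apply HS0; lra | exact HSle]. }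
          assert (0 < alpha ^ 2 / beta ^ 2) by (apply Rdiv_lt_0_compat; apply pow_lt; lra).
          nra. }
        assert (0 <= (1 - ge) ^ n) by (apply pow_le; lra).
        assert (Hb2 : 0 < beta ^ 2) by (apply pow_lt; lra).
        assert (beta ^ 2 * ge ^ n <= alpha ^ 2).
        { apply (Rmult_le_compat_l (beta ^ 2)) in Hgn; [| lra].
          replace (beta ^ 2 * (alpha ^ 2 / beta ^ 2)) with (alpha ^ 2) in Hgn by (field; lra). lra. }
        nra. }
    lra.
Qed.
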